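(* Let $\alpha_1\ge\alpha_2\ge\cdots\ge\alpha_d>0$ and let $\beta_1,\dots,\beta_d$ be a permutation of $\alpha_1,\dots,\alpha_d$. Then \[ \sum_{i=1}^d(\sqrt{\alpha_i}-\sqrt{\beta_i})^2\le2\sum_{j=1}^{d-1}\frac{\alpha_j-\alpha_{j+1}}{\alpha_j}\sum_{i=1}^j(\alpha_i-\beta_i). \] *)

(* Defs.v *)
From HB Require Import structures.
From mathcomp Require Import all_boot all_order all_algebra all_fingroup.
Set Implicit Arguments. Unset Strict Implicit. Unset Printing Implicit Defensive.
Import Order.TTheory GRing.Theory Num.Theory.

(* Main.v *)
Require Import Defs.
From HB Require Import structures.
From mathcomp Require Import all_boot all_order all_algebra all_fingroup.
From mathcomp Require Import ring lra zify.
Import Order.TTheory GRing.Theory Num.Theory.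
Local Open Scope ring_scope.

Definition Sx {R : rcfType} (x : nat -> R) i k :=
  \sum_(i <= j < k) (1 - x j.+1 ^+ 2 / x j ^+ 2).
Definition Gx {R : rcfType} (x : nat -> R) i k :=
  \sum_(i <= j < k) x j.+1 * (x j - x j.+1).

Lemma stepE (R : rcfType) (a b c : R) : 0 < c -> c <= b -> b <= a ->
  c ^+ 2 * (1 - b ^+ 2 / a ^+ 2) <= (a - b) * (b + c).
Proof.
move=> hc hcb hba.
have ha : 0 < a by apply: lt_le_trans hba; apply: lt_le_trans hcb.
have hb : 0 < b by apply: lt_le_trans hcb.
have -> : c^+2*(1 - b^+2/a^+2) = (c^+2*(a^+2-b^+2)) / a^+2.
  by field; rewrite gt_eqF.
rewrite ler_pdivrMr ?exprn_gt0 //.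
have h1 : 0 <= a - b by lra.
have h2 : 0 <= (b+c)*a^+2 - c^+2*(a+b).
  have e1 : 0 <= b * (a^+2 - c^+2) by apply: mulr_ge0; nra.
  have e2 : 0 <= c * a * (a - c) by apply: mulr_ge0; nra.
  nra.
have := mulr_ge0 h1 h2. nra.
Qed.

Lemma stepQ (R : rcfType) (a b c : R) : 0 < b -> b <= a -> a <= c ->
  (a - b) * (b + c) <= c ^+ 2 * (1 - b ^+ 2 / a ^+ 2).
Proof.
move=> hb hba hac.
have ha : 0 < a by apply: lt_le_trans hba.
have -> : c^+2*(1 - b^+2/a^+2) = (c^+2*(a^+2-b^+2)) / a^+2.
  by field; rewrite gt_eqF.
rewrite ler_pdivlMr ?exprn_gt0 //.
have h1 : 0 <= a - b by lra.
have h2 : 0 <= c^+2*(a+b) - (b+c)*a^+2.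
  have e1 : 0 <= b * (c^+2 - a^+2) by apply: mulr_ge0; nra.
  have e2 : 0 <= c * a * (c - a) by apply: mulr_ge0; nra.
  nra.
have := mulr_ge0 h1 h2. nra.
Qed.

Lemma lemE (R : rcfType) (n : nat) (x : nat -> R)
  (Hm : forall j l, (j <= l)%N -> (l <= n)%N -> x l <= x j)
  (Hp : forall j, (j <= n)%N -> 0 < x j) (i k : nat) :
  (i <= k)%N -> (k <= n)%N ->
  x k ^+ 2 * (1 + Sx x i k) - x i * x k <= Gx x i k.
Proof.
move=> hik hkn.
suff H : forall d i, (i + d = k)%N -> x k ^+2 * (1 + Sx x i k) - x i * x k <= Gx x i k.
  by apply: (H (k - i)%N); rewrite subnKC.
elim=> [|d IH] j hd.
  rewrite addn0 in hd; subst j; rewrite /Sx /Gx !big_geq // addr0 mulr1 expr2 subrr.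
  by [].
have hjk : (j < k)%N by lia.
have IH' := IH j.+1 ltac:(lia).
rewrite /Sx /Gx in IH' *; rewrite big_ltn // [in X in _ <= X]big_ltn //.
set S' := \sum_(j.+1 <= i0 < k) _.
set G' := \sum_(j.+1 <= i0 < k) _.
have st := @stepE R _ _ _ (Hp k hkn) (Hm j.+1 k ltac:(lia) hkn) (Hm j j.+1 ltac:(lia) ltac:(lia)).
move: st; set t := (1 - _ / _) => st.
move: IH' st; rewrite -/S' -/G' -/t; clearbody S' G' t => IH' st. nra.
Qed.

Lemma lemQ (R : rcfType) (n : nat) (x : nat -> R)
  (Hm : forall j l, (j <= l)%N -> (l <= n)%N -> x l <= x j)
  (Hp : forall j, (j <= n)%N -> 0 < x j) (m i : nat) :
  (m <= i)%N -> (i <= n)%N ->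
  x m ^+ 2 * (1 - Sx x m i) - x i * x m <= - Gx x m i.
Proof.
elim: i => [|i IH] hmi hin.
  have -> : m = 0%N by lia.
  by rewrite /Sx /Gx !big_geq // subr0 oppr0 mulr1 expr2 subrr.
case: (eqVneq m i.+1) => [->|hne].
  by rewrite /Sx /Gx !big_geq // subr0 oppr0 mulr1 expr2 subrr.
have hmi' : (m <= i)%N by lia.
have IH' := IH hmi' ltac:(lia).
rewrite /Sx /Gx in IH' *; rewrite big_nat_recr // [in X in _ <= X]big_nat_recr //=.
set S' := \sum_(m <= i0 < i) _.
set G' := \sum_(m <= i0 < i) _.
have st := @stepQ R _ _ _ (Hp i.+1 hin) (Hm i i.+1 ltac:(lia) hin) (Hm m i hmi' ltac:(lia)).
move: st; set t := (1 - _ / _) => st.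
move: IH' st; rewrite -/S' -/G' -/t; clearbody S' G' t => IH' st. nra.
Qed.

Lemma lemPair (R : rcfType) (n : nat) (x : nat -> R)
  (Hm : forall j l, (j <= l)%N -> (l <= n)%N -> x l <= x j)
  (Hp : forall j, (j <= n)%N -> 0 < x j) (i k : nat) :
  (i <= n)%N -> (k <= n)%N ->
  (x i - x k) ^+ 2 <= 2 * (Sx x i n * (x i ^+ 2 - x k ^+ 2))
    + (2 * (x i ^+ 2 * (1 - Sx x i n) + Gx x i n) - x i ^+ 2)
    - (2 * (x k ^+ 2 * (1 - Sx x k n) + Gx x k n) - x k ^+ 2).
Proof.
move=> hin hkn.
suff H : x k ^+ 2 * (1 + Sx x i n - Sx x k n) - x i * x k <= Gx x i n - Gx x k n.
  move: H; set u := Sx x i n; set v := Sx x k n; set g := Gx x i n; set h := Gx x k n.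
  clearbody u v g h => H. nra.
case: (leqP i k) => hik.
  have e1 : Sx x i n = Sx x i k + Sx x k n by rewrite /Sx (@big_cat_nat _ _ _ k) //.
  have e2 : Gx x i n = Gx x i k + Gx x k n by rewrite /Gx (@big_cat_nat _ _ _ k) //.
  rewrite e1 e2 addrK.
  have -> : 1 + (Sx x i k + Sx x k n) - Sx x k n = 1 + Sx x i k by rewrite addrA addrK.
  exact: (@lemE R n x Hm Hp i k hik hkn).
have hki : (k <= i)%N by lia.
have e1 : Sx x k n = Sx x k i + Sx x i n by rewrite /Sx (@big_cat_nat _ _ _ i) //.
have e2 : Gx x k n = Gx x k i + Gx x i n by rewrite /Gx (@big_cat_nat _ _ _ i) //.
rewrite e1 e2.
have := @lemQ R n x Hm Hp k i hki hin.
set S := Sx x k i; set T := Sx x i n; set G := Gx x k i; set U := Gx x i n.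
clearbody S T G U => H. nra.
Qed.

Lemma abel (R : rcfType) (c e : nat -> R) (N : nat) :
  \sum_(0 <= j < N) (c j * \sum_(0 <= i < j.+1) e i)
  = \sum_(0 <= i < N.+1) ((\sum_(i <= j < N) c j) * e i).
Proof.
elim: N => [|N IH].
  by rewrite big_geq // big_nat1 big_geq // mul0r.
rewrite big_nat_recr //= IH [in RHS]big_nat_recr //= [X in _ = _ + X * _]big_geq //.
rewrite mul0r addr0.
rewrite [RHS](@eq_big_nat _ _ _ 0 N.+1 _ (fun i => (\sum_(i <= j < N) c j) * e i + c N * e i)).
  by rewrite big_split /= mulr_sumr.
move=> i /andP[_ hi]; rewrite big_nat_recr ?mulrDl //; lia.
Qed.

Theorem mainTheorem14 (R : rcfType) (n : nat) (alpha : 'I_n.+1 -> R)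
    (s : 'S_n.+1)
    (Hsorted : forall i j : 'I_n.+1, (i <= j)%N -> alpha j <= alpha i)
    (Hpos : 0 < alpha ord_max) :
  \sum_(i < n.+1) (Num.sqrt (alpha i) - Num.sqrt (alpha (s i))) ^+ 2
  <= 2 * \sum_(0 <= j < n)
           ((alpha (inord j) - alpha (inord j.+1)) / alpha (inord j) *
            \sum_(0 <= i < j.+1) (alpha (inord i) - alpha (s (inord i)))).
Proof.
pose A j := alpha (inord j).
pose x j := Num.sqrt (A j).
have hA : forall j, (j <= n)%N -> 0 < A j.
  move=> j hj; apply: lt_le_trans Hpos _; apply: Hsorted.
  by rewrite /= inordK.
have hx2 : forall j, (j <= n)%N -> x j ^+ 2 = A j.
  by move=> j hj; rewrite /x sqr_sqrtr // ltW // hA.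
have Hm : forall j l, (j <= l)%N -> (l <= n)%N -> x l <= x j.
  move=> j l hjl hln; rewrite /x ler_sqrt; last by apply: ltW; apply: hA; lia.
  by apply: Hsorted; rewrite !inordK //; lia.
have Hp : forall j, (j <= n)%N -> 0 < x j.
  by move=> j hj; rewrite /x sqrtr_gt0 hA.
pose u j := Sx x j n.
pose H j := 2 * (x j ^+ 2 * (1 - u j) + Gx x j n) - x j ^+ 2.
have key : forall i : 'I_n.+1,
    (x i - x (s i)) ^+ 2 <= 2 * (u i * (x i ^+ 2 - x (s i) ^+ 2)) + (H i - H (s i)).
  move=> i; rewrite addrA; exact: (@lemPair R n x Hm Hp i (s i) (leq_ord i) (leq_ord (s i))).
have eL : forall i : 'I_n.+1, Num.sqrt (alpha i) = x i.
  by move=> i; rewrite /x /A inord_val.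
have eH : \sum_(i < n.+1) (H i - H (s i)) = 0.
  by rewrite sumrB (reindex_inj (@perm_inj _ s)) subrr.
under eq_bigr => i _ do rewrite !eL.
apply: le_trans (ler_sum _ (fun i _ => key i)) _.
rewrite big_split /= eH addr0.
have EA := @abel R (fun j => (alpha (inord j) - alpha (inord j.+1)) / alpha (inord j))
   (fun i => alpha (inord i) - alpha (s (inord i))) n.
rewrite EA big_mkord mulr_sumr.
rewrite le_eqVlt; apply/orP; left; apply/eqP; apply: eq_bigr => i _.
rewrite inord_val hx2 ?leq_ord // hx2 ?leq_ord // /A !inord_val.
congr (2 * (_ * _)).
rewrite /u /Sx; apply: eq_big_nat => j /andP[_ hj].
rewrite hx2 ?hx2; [|lia|lia].
have hz : A j != 0 by rewrite gt_eqF // hA //; lia.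
move: hz; rewrite /A => hz; by field.
Qed.
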